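(* Let $G$ be an esp-digraph. Then $\chi_o(G)\le 7$.
   Context: An oriented graph is a digraph without loops and without pairs of opposite arcs. For a digraph $G=(V,E)$ (parallel arcs allowed; the definitions apply verbatim), an oriented $r$-vertex-coloring is a map $c:V\to\{1,\dots,r\}$ such that (i) $c(u)\ne c(v)$ for every arc $(u,v)\in E$, and (ii) $c(u)\ne c(y)$ for every two arcs $(u,v),(x,y)\in E$ with $c(v)=c(x)$. Equivalently, $c$ is a homomorphism to an oriented graph on $r$ vertices. The oriented chromatic number $\chi_o(G)$ is the smallest $r$ for which such a coloring exists. Edge series-parallel (multi)digraphs (esp-digraphs) are defined recursively, each with a distinguished source and sink: (i) a digraph with two distinct vertices $u,v$ and the single arc $(u,v)$ is an esp-digraph with source $u$ and sink $v$; (ii) if $G_1,G_2$ are vertex-disjoint esp-digraphs, then the parallel composition $G_1\cup G_2$ (identify the source of $G_1$ with the source of $G_2$ and the sink of $G_1$ with the sink of $G_2$; arcs are united, possibly creating parallel arcs) is an esp-digraph with these identified source and sink, and the series composition $G_1\times G_2$ (identify the sink of $G_1$ with the source of $G_2$) is an esp-digraph with source the source of $G_1$ and sink the sink of $G_2$. *)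

(* Defs.v *)
From mathcomp Require Import all_boot.
Set Implicit Arguments. Unset Strict Implicit. Unset Printing Implicit Defensive.

(* A (multi)digraph is given by its list of arcs (a multiset: repetitions =
   parallel arcs) over vertex labels in nat.  Its vertex set is the set of
   endpoints of arcs (esp-digraphs have no isolated vertices). *)
Definition digraph := seq (nat * nat).

Definition vertices (E : digraph) : seq nat :=
  [seq a.1 | a <- E] ++ [seq a.2 | a <- E].

(* Edge series-parallel digraphs with distinguished source s and sink t.
   Vertex-disjointness of the two components (apart from the identified
   vertices) is enforced on the labels. *)
Inductive esp : digraph -> nat -> nat -> Prop :=
| esp_arc (u v : nat) : u <> v -> esp [:: (u, v)] u v
| esp_par (E1 E2 : digraph) (s t : nat) :
    esp E1 s t -> esp E2 s t ->
    (forall x, x \in vertices E1 -> x \in vertices E2 -> x = s \/ x = t) ->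
    esp (E1 ++ E2) s t
| esp_ser (E1 E2 : digraph) (s m t : nat) :
    esp E1 s m -> esp E2 m t ->
    (forall x, x \in vertices E1 -> x \in vertices E2 -> x = m) ->
    esp (E1 ++ E2) s t.

Definition oriented_coloring (r : nat) (E : digraph) (c : nat -> 'I_r) : Prop :=
  (forall u v, (u, v) \in E -> c u <> c v) /\
  (forall u v x y, (u, v) \in E -> (x, y) \in E -> c v = c x -> c u <> c y).

(* chi_o(G) <= r  iff  G has an oriented r-coloring (colorings with fewer
   colors are in particular r-colorings). *)
Definition chi_o_le (E : digraph) (r : nat) : Prop :=
  exists c : nat -> 'I_r, oriented_coloring E c.

(* Main.v *)
Require Import Defs.
From mathcomp Require Import all_boot.

Definition arc7 (a b : 'I_7) : bool := ((b + 7 - a) %% 7) \in [:: 1; 2; 4].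

Definition wf (a b : 'I_7) : 'I_7 := inord ((a + 4*(b+7-a)) %% 7).
Lemma wfE a b : nat_of_ord (wf a b) = (a + 4*(b+7-a)) %% 7.
Proof. by rewrite inordK // ltn_mod. Qed.
Lemma arc7_path (a b : 'I_7) : arc7 a b -> arc7 a (wf a b) && arc7 (wf a b) b.
Proof. rewrite /arc7 wfE.
by case: a b => [[|[|[|[|[|[|[|n]]]]]]] Ha] [[|[|[|[|[|[|[|m]]]]]]] Hb]. Qed.
Lemma arc7_asym (a b : 'I_7) : ~~ (arc7 a b && arc7 b a).
Proof. by case: a b => [[|[|[|[|[|[|[|n]]]]]]] Ha] [[|[|[|[|[|[|[|m]]]]]]] Hb]. Qed.
Lemma arc7_irr (a : 'I_7) : ~~ arc7 a a.
Proof. by case: a => [[|[|[|[|[|[|[|n]]]]]]] ?]. Qed.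

Lemma vert_l (E : digraph) u v : (u, v) \in E -> u \in vertices E.
Proof. by move=> H; rewrite mem_cat; apply/orP; left; apply/mapP; exists (u, v). Qed.
Lemma vert_r (E : digraph) u v : (u, v) \in E -> v \in vertices E.
Proof. by move=> H; rewrite mem_cat; apply/orP; right; apply/mapP; exists (u, v). Qed.

Lemma esp_vert (E : digraph) s t : esp E s t -> s \in vertices E /\ t \in vertices E.
Proof.
elim=> {E s t}.
- move=> u v _; split; [exact: (@vert_l [:: (u, v)] u v (mem_head _ _)) | exact: (@vert_r [:: (u, v)] u v (mem_head _ _))].
- move=> E1 E2 s t _ [H1 H2] _ _ _; rewrite /vertices !map_cat !mem_cat.
  move: H1 H2; rewrite /vertices !mem_cat.
  by case/orP=> ->; case/orP=> ->; rewrite ?orbT.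
- move=> E1 E2 s m t _ [H1 _] _ [_ H2] _; rewrite /vertices !map_cat !mem_cat.
  move: H1 H2; rewrite /vertices !mem_cat.
  by case/orP=> ->; case/orP=> ->; rewrite ?orbT.
Qed.

Definition glue (E1 : digraph) (c1 c2 : nat -> 'I_7) :=
  fun x => if x \in vertices E1 then c1 x else c2 x.

Lemma glue_hom (E1 E2 : digraph) c1 c2 :
  (forall x, x \in vertices E1 -> x \in vertices E2 -> c1 x = c2 x) ->
  (forall u v, (u, v) \in E1 -> arc7 (c1 u) (c1 v)) ->
  (forall u v, (u, v) \in E2 -> arc7 (c2 u) (c2 v)) ->
  forall u v, (u, v) \in E1 ++ E2 -> arc7 (glue E1 c1 c2 u) (glue E1 c1 c2 v).
Proof.
move=> Hag H1 H2 u v; rewrite mem_cat => /orP [] Huv.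
  by rewrite /glue (vert_l _ _ _ Huv) (vert_r _ _ _ Huv); apply: H1.
have e2 : forall x, x \in vertices E2 -> glue E1 c1 c2 x = c2 x.
  by move=> x Hx; rewrite /glue; case: ifP => // Hx1; apply: Hag.
by rewrite (e2 _ (vert_l _ _ _ Huv)) (e2 _ (vert_r _ _ _ Huv)); apply: H2.
Qed.

Lemma main (E : digraph) s t : esp E s t -> forall a b : 'I_7, arc7 a b ->
  exists c : nat -> 'I_7, [/\ c s = a, c t = b &
     forall u v, (u, v) \in E -> arc7 (c u) (c v)].
Proof.
elim=> {E s t}.
- move=> u v Huv a b Hab; exists (fun x => if x == u then a else b); split.
  + by rewrite eqxx.
  + by case: eqP => // /esym.
  + move=> x y; rewrite inE => /eqP [-> ->]; rewrite eqxx.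
    by case: eqP => // /esym.
- move=> E1 E2 s t _ IH1 _ IH2 Hd a b Hab.
  have [c1 [s1 t1 h1]] := IH1 a b Hab; have [c2 [s2 t2 h2]] := IH2 a b Hab.
  have Hag : forall x, x \in vertices E1 -> x \in vertices E2 -> c1 x = c2 x.
    by move=> x X1 X2; case: (Hd x X1 X2) => ->; rewrite ?s1 ?s2 ?t1 ?t2.
  exists (glue E1 c1 c2); split; last exact: glue_hom.
  + by rewrite /glue; case: ifP.
  + by rewrite /glue; case: ifP.
- move=> E1 E2 s m t H1 IH1 H2 IH2 Hd a b Hab.
  have /andP [Haw Hwb] := arc7_path _ _ Hab; set w := wf a b in Haw Hwb.
  have [c1 [s1 t1 h1]] := IH1 a w Haw; have [c2 [s2 t2 h2]] := IH2 w b Hwb.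
  have Hag : forall x, x \in vertices E1 -> x \in vertices E2 -> c1 x = c2 x.
    by move=> x X1 X2; rewrite (Hd x X1 X2) t1 s2.
  exists (glue E1 c1 c2); split; last exact: glue_hom.
  + by rewrite /glue (esp_vert _ _ _ H1).1.
  + rewrite /glue; case: ifP => // X1.
    by rewrite (Hag t X1 (esp_vert _ _ _ H2).2).
Qed.

Theorem theorem3 (E : digraph) (s t : nat) : esp E s t -> chi_o_le E 7.
Proof.
move=> H.
have Hab : arc7 (@Ordinal 7 0 isT) (@Ordinal 7 1 isT) by [].
have [c [_ _ hc]] := main _ _ _ H _ _ Hab.
exists c; split.
- move=> u v Huv Heq; have := hc u v Huv; rewrite Heq.
  by rewrite (negbTE (arc7_irr (c v))).
- move=> u v x y Huv Hxy Hvx Huy.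
  have := hc u v Huv; have := hc x y Hxy; rewrite Hvx Huy => A B.
  by have := arc7_asym (c x) (c y); rewrite A B.
Qed.
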